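(* Let $n\ge1$, $0=b_0<b_1<\dots<b_n<b_{n+1}=1$, $h_i=b_{i+1}-b_i$ ($i=0,\dots,n$), $h_{\min}=\min_{0\le i\le n}h_i$, $\tilde h_i=\min\{h_{i-1},h_i\}$ ($i=1,\dots,n$). Let $w\in C(I)$, $I=(0,1)$, with $0\le w_0\le w(x)$ for all $x\in I$. Then for all $\boldsymbol\alpha=(\alpha_0,\dots,\alpha_n)^T\in\mathbb{R}^{n+1}$, $\boldsymbol\beta=(\beta_1,\dots,\beta_n)^T\in\mathbb{R}^n$: $$(\boldsymbol\alpha^T,\boldsymbol\beta^T)\,\mathbb{H}_\Sigma(w)\begin{pmatrix}\boldsymbol\alpha\\ \boldsymbol\beta\end{pmatrix}\ \ge\ \frac{w_0h_{\min}^3}{96}|\boldsymbol\alpha|^2+\frac{w_0}{24}\sum_{i=1}^n\tilde h_i\beta_i^2,$$ and, if $w_0>0$, then for every $\tau\in(0,1]$, $$(\boldsymbol\alpha^T,\boldsymbol\beta^T)\,\mathbb{H}_\Lambda(w)\begin{pmatrix}\boldsymbol\alpha\\ \boldsymbol\beta\end{pmatrix}\ \ge\ \frac{w_0(1-\tau)h_{\min}}{4}|\boldsymbol\alpha|^2-\frac{1}{2\tau w_0}\sum_{i=1}^n w(b_i)^2\big(h_{i-1}^{-1}+h_i^{-1}\big)\beta_i^2,$$ where $|\boldsymbol\alpha|$ is the Euclidean norm.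
   Context: $\sigma(t)=\max\{0,t\}$; $H(t)=1$ for $t>0$, $H(0)=1/2$, $H(t)=0$ for $t<0$. Set $\sigma_i(x)=\sigma(x-b_i)$, $H_i(x)=H(x-b_i)$. $\mathbb{H}_\Sigma(w)$ is the symmetric $(2n+1)\times(2n+1)$ matrix with blocks: upper-left $(\int_0^1 w\,\sigma_i\sigma_j\,dx)_{i,j=0}^n$, upper-right $(-\int_0^1 w\,\sigma_iH_j\,dx)_{i=0..n,\,j=1..n}$, lower-left its transpose, lower-right $(\int_0^1 w\,H_iH_j\,dx)_{i,j=1}^n$. $\mathbb{H}_\Lambda(w)$ is the symmetric $(2n+1)\times(2n+1)$ matrix with blocks: upper-left $(\int_0^1 w\,H_iH_j\,dx)_{i,j=0}^n$, upper-right $K=(K_{ij})_{i=0..n,\,j=1..n}$ with $K_{ij}=-w(b_j)H(b_j-b_i)$ (i.e. the formal integral $-\int_0^1 w(x)H_i(x)\delta(x-b_j)dx$), lower-left $K^T$, lower-right the zero $n\times n$ matrix. *)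

(* Defs.v *)
From HB Require Import structures.
From mathcomp Require Import all_boot all_order all_algebra.
From mathcomp Require Import all_classical all_reals all_analysis.
Set Implicit Arguments. Unset Strict Implicit. Unset Printing Implicit Defensive.
Import Order.TTheory GRing.Theory Num.Theory.
Import numFieldNormedType.Exports.
Local Open Scope classical_set_scope.
Local Open Scope ring_scope.

Section Defs.
Variable R : realType.

Definition relu (t : R) : R := Num.max 0 t.
Definition heav (t : R) : R := if 0 < t then 1 else if t == 0 then 1 / 2 else 0.

Definition I01 (f : R -> R) : R :=
  Rintegral (@lebesgue_measure R) `]0%R, 1%R[ f.

(* b : nat -> R gives the breakpoints b_0, ..., b_{n+1} *)
Definition HSigma (n : nat) (b : nat -> R) (w : R -> R) : 'M[R]_(n.+1 + n) :=
  block_mx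
    (\matrix_(i < n.+1, j < n.+1)
        I01 (fun x => w x * relu (x - b i) * relu (x - b j)))
    (\matrix_(i < n.+1, j < n)
        - I01 (fun x => w x * relu (x - b i) * heav (x - b j.+1)))
    (\matrix_(i < n, j < n.+1)
        - I01 (fun x => w x * relu (x - b j) * heav (x - b i.+1)))
    (\matrix_(i < n, j < n)
        I01 (fun x => w x * heav (x - b i.+1) * heav (x - b j.+1))).

Definition HLambda (n : nat) (b : nat -> R) (w : R -> R) : 'M[R]_(n.+1 + n) :=
  block_mx
    (\matrix_(i < n.+1, j < n.+1)
        I01 (fun x => w x * heav (x - b i) * heav (x - b j)))
    (\matrix_(i < n.+1, j < n)
        - (w (b j.+1) * heav (b j.+1 - b i)))
    (\matrix_(i < n, j < n.+1)
        - (w (b i.+1) * heav (b i.+1 - b j)))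
    0.

Definition qform (n : nat) (M : 'M[R]_(n.+1 + n))
    (alpha : 'rV[R]_n.+1) (beta : 'rV[R]_n) : R :=
  let v := row_mx alpha beta in (v *m M *m v^T) 0 0.

Definition hh (b : nat -> R) (i : nat) : R := b i.+1 - b i.

Definition hmin (n : nat) (b : nat -> R) : R :=
  \big[Num.min/hh b 0]_(i < n.+1) hh b i.

Definition htil (b : nat -> R) (i : nat) : R := Num.min (hh b i.-1) (hh b i).

End Defs.

(* Main.v *)
Require Import Defs.
From HB Require Import structures.
From mathcomp Require Import all_boot all_order all_algebra.
From mathcomp Require Import all_classical all_reals all_analysis.
From mathcomp Require Import ring lra.
Import Order.TTheory GRing.Theory Num.Theory.
Import numFieldNormedType.Exports.
Local Open Scope classical_set_scope.
Local Open Scope ring_scope.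

Set Implicit Arguments. Unset Strict Implicit. Unset Printing Implicit Defensive.


Lemma bnd_of (R : realType) (A : set R) (f : R -> R) M :
  (forall x, A x -> `|f x| <= M) -> [bounded f x | x in A].
Proof.
move=> hM; rewrite /bounded_near; near=> M' => x Ax /=.
apply: le_trans (hM x Ax) _; near: M'; exact: nbhs_pinfty_ge (num_real M).
Unshelve. all: by end_near. Qed.

Lemma intW (R : realType) (a b : R) (w g : R -> R) :
  (@lebesgue_measure R).-integrable `]a, b[ (EFin \o w) ->
  measurable_fun `]a, b[ g ->
  (exists M, forall x, x \in `]a, b[ -> `|g x| <= M) ->
  (@lebesgue_measure R).-integrable `]a, b[ (EFin \o (fun x => w x * g x)).
Proof.
move=> wi mg [M hM].
have := integrableMl _ wi mg (bnd_of hM).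
by move=> h; apply: eq_integrable (h _) => //.
Qed.

Lemma integ_sum (R : realType) (a b : R) (I : Type) (s : seq I) (f : I -> R -> R) :
  (forall i, (@lebesgue_measure R).-integrable `]a, b[ (EFin \o f i)) ->
  (@lebesgue_measure R).-integrable `]a, b[ (EFin \o (fun x => \sum_(i <- s) f i x)).
Proof.
move=> hf; elim: s => [|i s ih].
  apply: (@eq_integrable _ _ _ _ _ _ (cst 0%:E)) => //; last exact: integrable0.
  by move=> x _ /=; rewrite big_nil.
apply: (eq_integrable _ _ _ _ (integrableD _ (hf i) ih)) => //.
by move=> x _ /=; rewrite big_cons.
Qed.

Lemma Rint_sum (R : realType) (a b : R) (I : Type) (s : seq I) (f : I -> R -> R) :
  (forall i, (@lebesgue_measure R).-integrable `]a, b[ (EFin \o f i)) ->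
  \int[@lebesgue_measure R]_(x in `]a, b[) (\sum_(i <- s) f i x) =
  \sum_(i <- s) \int[@lebesgue_measure R]_(x in `]a, b[) f i x.
Proof.
move=> hf; elim: s => [|i s ih].
  rewrite big_nil; under eq_Rintegral do rewrite big_nil.
  by rewrite Rintegral_cst// mul0r.
rewrite big_cons -ih -RintegralD//; last exact: integ_sum.
by apply: eq_Rintegral => x _; rewrite big_cons.
Qed.

Lemma int_poly (R : realType) (a c : R) (p : {poly R}) : a < c ->
  \int[@lebesgue_measure R]_(x in `]a, c[) (p^`()).[x] = p.[c] - p.[a].
Proof.
move=> ac.
have iac : (@lebesgue_measure R).-integrable `[a, c] (EFin \o horner p^`()).
  apply: continuous_compact_integrable; first exact: segment_compact.
  by apply: continuous_subspaceT => x; exact: continuous_horner.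
rewrite Rintegral_itv_obnd_cbnd; last first.
  by apply: integrableS iac => //; apply: subset_itv; rewrite bnd_simp.
rewrite Rintegral_itv_bndo_bndc; last first.
  by apply: integrableS iac => //; apply: subset_itv; rewrite bnd_simp.
rewrite /Rintegral (@continuous_FTC2 _ _ (horner p))//=.
- by apply: continuous_subspaceT => x; exact: continuous_horner.
- split.
  + by move=> x _; exact: derivable_horner.
  + by apply: cvg_at_right_filter; exact: continuous_horner.
  + by apply: cvg_at_left_filter; exact: continuous_horner.
- by move=> x _; rewrite -derivE.
Qed.


Lemma int_quad (R : realType) (a c L s : R) : a < c ->
  \int[@lebesgue_measure R]_(x in `]a, c[) ((L + s * (x - a)) ^+ 2) =
  (c - a) * L ^+ 2 + L * s * (c - a) ^+ 2 + s ^+ 2 * (c - a) ^+ 3 / 3.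
Proof.
move=> ac.
pose G : {poly R} := 'X - a%:P.
pose p : {poly R} := L ^+ 2 *: G + (L * s) *: (G * G) + (s ^+ 2 / 3) *: (G * (G * G)).
have hp : forall x, (p^`()).[x] = (L + s * (x - a)) ^+ 2.
  move=> x; rewrite /p /G !(derivD, derivZ, derivM, derivXsubC, derivN, derivX, derivC).
  by rewrite !hornerE /=; field.
transitivity (\int[@lebesgue_measure R]_(x in `]a, c[) (p^`()).[x]).
  by apply: eq_Rintegral => x _; rewrite hp.
by rewrite int_poly // /p /G !(hornerD, hornerZ, hornerM, hornerN, hornerX, hornerC) /=; field.
Qed.

Lemma mrelu (R : realType) (a b c : R) :
  measurable_fun `]a, b[ (fun x => relu (x - c)).
Proof.
rewrite (_ : (fun x => relu (x - c)) = ((cst 0) \max (fun x => x - c))) //.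
apply: measurable_realfun.measurable_maxr => //.
exact: measurable_realfun.measurable_funB.
Qed.

Lemma memitv (R : realType) (i : interval R) (x : R) : (x \in [set` i]) = (x \in i).
Proof. by apply/idP/idP => [/set_mem //|h]; apply: mem_set. Qed.

Lemma heavE (R : realType) (c x : R) :
  heav (x - c) = ((\1_(`[c, +oo[) x : R) + (\1_(`]c, +oo[) x : R)) / 2.
Proof.
rewrite /heav !indicE !memitv !in_itv /= !andbT subr_gt0 subr_eq0.
case: ltgtP => h /=; lra.
Qed.

Lemma mheav (R : realType) (a b c : R) :
  measurable_fun `]a, b[ (fun x => heav (x - c)).
Proof.
rewrite (_ : (fun x => heav (x - c)) =
   (fun x => ((\1_(`[c, +oo[) x : R) + (\1_(`]c, +oo[) x : R)) * 2^-1)); last first.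
  by apply/funext => x; rewrite heavE.
apply: measurable_realfun.measurable_funM => //.
by apply: measurable_realfun.measurable_funD; apply: measurable_realfun.measurable_indic.
Qed.

Lemma relu_ge0 (R : realType) (t : R) : 0 <= relu t.
Proof. by rewrite /relu le_max lexx. Qed.

Lemma relu_le (R : realType) (t : R) : relu t <= `|t|.
Proof. by rewrite /relu ge_max normr_ge0 ler_norm. Qed.

Lemma heav_ge0 (R : realType) (t : R) : 0 <= heav t.
Proof. rewrite /heav; case: ifP => _; first lra; case: ifP => _; lra. Qed.

Lemma heav_le1 (R : realType) (t : R) : heav t <= 1.
Proof. rewrite /heav; case: ifP => _; first lra; case: ifP => _; lra. Qed.


Lemma addmE (R : realType) m k (A B : 'M[R]_(m, k)) i j : (A + B) i j = A i j + B i j.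
Proof. by rewrite mxE. Qed.

Lemma bilE (R : realType) m k (x : 'rV[R]_m) (M : 'M[R]_(m, k)) (y : 'rV[R]_k) :
  (x *m M *m y^T) 0 0 = \sum_(i < m) \sum_(j < k) x 0 i * y 0 j * M i j.
Proof.
rewrite !mxE; under eq_bigr do rewrite !mxE big_distrl /=.
rewrite exchange_big /=; apply: eq_bigr => i _; apply: eq_bigr => j _.
by rewrite mulrAC mulrC mulrA.
Qed.

Lemma qform_block (R : realType) n (A : 'M[R]_n.+1) (B : 'M[R]_(n.+1, n))
  (C : 'M[R]_(n, n.+1)) (E : 'M[R]_n) (al : 'rV[R]_n.+1) (be : 'rV[R]_n) :
  qform (block_mx A B C E) al be =
  \sum_(i < n.+1) \sum_(j < n.+1) al 0 i * al 0 j * A i j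
  + \sum_(i < n.+1) \sum_(j < n) al 0 i * be 0 j * B i j
  + \sum_(i < n) \sum_(j < n.+1) be 0 i * al 0 j * C i j
  + \sum_(i < n) \sum_(j < n) be 0 i * be 0 j * E i j.
Proof.
rewrite /qform /= mul_row_block tr_row_mx mul_row_col !mulmxDl !addmE !bilE.
ring.
Qed.


Lemma bmono (R : realType) n (b : nat -> R) :
  (forall i : nat, (i <= n)%N -> b i < b i.+1) ->
  forall i j, (i <= j)%N -> (j <= n.+1)%N -> b i <= b j.
Proof.
move=> hb i j ij jn; elim: j ij jn => [|j ih].
  by rewrite leqn0 => /eqP -> _.
rewrite leq_eqVlt => /orP[/eqP -> //|ij] jn.
apply: le_trans (ih ij (ltnW jn)) _; apply/ltW/hb; by rewrite -ltnS.
Qed.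

Lemma bmono_lt (R : realType) n (b : nat -> R) :
  (forall i : nat, (i <= n)%N -> b i < b i.+1) ->
  forall i j, (i < j)%N -> (j <= n.+1)%N -> b i < b j.
Proof.
move=> hb i j ij jn; apply: (lt_le_trans (hb i _)).
  by rewrite -ltnS (leq_trans ij jn).
exact: (bmono hb).
Qed.

Lemma integ_restr (R : realType) (a c a' c' : R) (g : R -> R) :
  a <= a' -> c' <= c ->
  (@lebesgue_measure R).-integrable `]a, c[ (EFin \o g) ->
  (@lebesgue_measure R).-integrable `]a, c[ (EFin \o (g \_ `]a', c'[)).
Proof.
move=> aa cc gi.
rewrite -restrict_EFin; apply/integrable_restrict => //.
apply: integrableS gi => //.
by apply: measurableI.
Qed.

Lemma pieces (R : realType) n (b : nat -> R) (g : R -> R) :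
  b 0%N = 0 -> b n.+1 = 1 ->
  (forall i : nat, (i <= n)%N -> b i < b i.+1) ->
  (@lebesgue_measure R).-integrable `]0, 1[ (EFin \o g) ->
  (forall x, x \in `]0, 1[ -> 0 <= g x) ->
  \sum_(k < n.+1) \int[@lebesgue_measure R]_(x in `]b k, b k.+1[) g x
    <= \int[@lebesgue_measure R]_(x in `]0, 1[) g x.
Proof.
move=> b0 b1 hb gi g0.
have sub : forall k : 'I_n.+1, `]b k, b k.+1[ `<=` `]0, 1[.
  move=> k; apply: subset_itv; rewrite bnd_simp.
    by rewrite -b0; exact: (bmono hb (leq0n k) (ltnW (ltn_ord k))).
  by rewrite -b1; exact: (bmono hb (ltn_ord k) (leqnn _)).
have E : forall k : 'I_n.+1, \int[@lebesgue_measure R]_(x in `]b k, b k.+1[) g x =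
   \int[@lebesgue_measure R]_(x in `]0, 1[) (g \_ `]b k, b k.+1[) x.
  by move=> k; rewrite -Rintegral_mkcondr setIidr //; exact: sub.
under eq_bigr do rewrite E.
rewrite -Rint_sum; last first.
  move=> k; apply: integ_restr gi.
    by rewrite -b0; exact: (bmono hb (leq0n k) (ltnW (ltn_ord k))).
  by rewrite -b1; exact: (bmono hb (ltn_ord k) (leqnn _)).
apply: le_Rintegral => //.
- apply: integ_sum => k; apply: integ_restr gi.
    by rewrite -b0; exact: (bmono hb (leq0n k) (ltnW (ltn_ord k))).
  by rewrite -b1; exact: (bmono hb (ltn_ord k) (leqnn _)).
move=> x Dx.
have [[k kin]|none] := pselect (exists k : 'I_n.+1, x \in `]b k, b k.+1[).
  rewrite (bigD1 k) //= patchE memitv kin big1 ?addr0 // => l lk.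
  rewrite patchE memitv; case: ifPn => // lin; exfalso.
  move: kin lin; rewrite !in_itv /= => /andP[k1 k2] /andP[l1 l2].
  case: (ltngtP k l) => kl.
  - have := bmono hb kl (ltnW (ltn_ord l)); lra.
  - have := bmono hb kl (ltnW (ltn_ord k)); lra.
  - by move: lk; rewrite -val_eqE /= kl eqxx.
rewrite big1; first exact: g0 x Dx.
move=> k _; rewrite patchE memitv; case: ifPn => // kin; exfalso; apply: none; by exists k.
Qed.


Lemma integZ (R : realType) (a c k : R) (f : R -> R) :
  (@lebesgue_measure R).-integrable `]a, c[ (EFin \o f) ->
  (@lebesgue_measure R).-integrable `]a, c[ (EFin \o (fun x => k * f x)).
Proof.
move=> fi; apply: (eq_integrable _ _ _ _ (integrableZl _ k fi)) => //.
Qed.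

Lemma dsum_int (R : realType) (a c : R) p q (C : 'I_p -> 'I_q -> R)
  (f : 'I_p -> 'I_q -> R -> R) :
  (forall i j, (@lebesgue_measure R).-integrable `]a, c[ (EFin \o f i j)) ->
  \sum_i \sum_j C i j * \int[@lebesgue_measure R]_(x in `]a, c[) f i j x =
  \int[@lebesgue_measure R]_(x in `]a, c[) (\sum_i \sum_j C i j * f i j x).
Proof.
move=> fi; rewrite Rint_sum; last first.
  by move=> i; apply: integ_sum => j; apply: integZ.
apply: eq_bigr => i _; rewrite Rint_sum; last by move=> j; apply: integZ.
by apply: eq_bigr => j _; rewrite RintegralZl.
Qed.

Lemma dsum_integ (R : realType) (a c : R) p q (C : 'I_p -> 'I_q -> R)
  (f : 'I_p -> 'I_q -> R -> R) :
  (forall i j, (@lebesgue_measure R).-integrable `]a, c[ (EFin \o f i j)) ->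
  (@lebesgue_measure R).-integrable `]a, c[
     (EFin \o (fun x => \sum_i \sum_j C i j * f i j x)).
Proof.
by move=> fi; apply: integ_sum => i; apply: integ_sum => j; apply: integZ.
Qed.

Lemma relu_bnd (R : realType) (c x : R) : x \in `]0, 1[ -> `|relu (x - c)| <= 1 + `|c|.
Proof.
rewrite in_itv /= => /andP[x0 x1].
rewrite ger0_norm ?relu_ge0 //; apply: le_trans (relu_le _) _.
apply: le_trans (ler_normB _ _) _; rewrite ger0_norm; lra.
Qed.

Lemma heav_bnd (R : realType) (t : R) : `|heav t| <= 1.
Proof. by rewrite ger0_norm ?heav_ge0 ?heav_le1. Qed.

Lemma intW2 (R : realType) (w f g : R -> R) (Mf Mg : R) :
  (@lebesgue_measure R).-integrable `]0, 1[ (EFin \o w) ->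
  measurable_fun `](0 : R), 1[ f -> measurable_fun `](0 : R), 1[ g ->
  (forall x, x \in `]0, 1[ -> `|f x| <= Mf) ->
  (forall x, x \in `]0, 1[ -> `|g x| <= Mg) ->
  (@lebesgue_measure R).-integrable `]0, 1[ (EFin \o (fun x => w x * f x * g x)).
Proof.
move=> wi mf mg bf bg.
have := @intW R 0 1 w (fun x => f x * g x) wi (measurable_realfun.measurable_funM mf mg).
move=> h; apply: (eq_integrable _ _ _ _ (h _)) => //.
  by move=> x _ /=; rewrite mulrA.
exists (Mf * Mg) => x xD; rewrite normrM; apply: ler_pM => //; by [apply: bf|apply: bg].
Qed.

Lemma mrelu01 (R : realType) (c : R) : measurable_fun `](0 : R), 1[ (fun x => relu (x - c)).
Proof. exact: mrelu. Qed.
Lemma mheav01 (R : realType) (c : R) : measurable_fun `](0 : R), 1[ (fun x => heav (x - c)).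
Proof. exact: mheav. Qed.


Lemma dprodE (R : realType) p q (W : R) (F : 'I_p -> R) (G : 'I_q -> R)
  (H : 'I_p -> 'I_q -> R) : (forall i j, H i j = W * F i * G j) ->
  \sum_i \sum_j H i j = W * (\sum_i F i) * (\sum_j G j).
Proof.
move=> hH; rewrite -mulrA mulr_suml mulr_sumr; apply: eq_bigr => i _.
by rewrite mulr_sumr mulr_sumr; apply: eq_bigr => j _; rewrite hH mulrA.
Qed.

Lemma integD' (R : realType) (a c : R) (f g : R -> R) :
  (@lebesgue_measure R).-integrable `]a, c[ (EFin \o f) ->
  (@lebesgue_measure R).-integrable `]a, c[ (EFin \o g) ->
  (@lebesgue_measure R).-integrable `]a, c[ (EFin \o (fun x => f x + g x)).
Proof.
move=> fi gi; apply: (eq_integrable _ _ _ _ (integrableD _ fi gi)) => //.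
Qed.

Lemma HS_int (R : realType) n (b : nat -> R) (w : R -> R)
  (al : 'rV[R]_n.+1) (be : 'rV[R]_n) :
  (@lebesgue_measure R).-integrable `]0, 1[ (EFin \o w) ->
  qform (HSigma n b w) al be =
  \int[@lebesgue_measure R]_(x in `]0, 1[)
     (w x * (\sum_(i < n.+1) al 0 i * relu (x - b i)
             - \sum_(j < n) be 0 j * heav (x - b j.+1)) ^+ 2).
Proof.
move=> wi.
have i1 : forall (i : 'I_n.+1) (j : 'I_n.+1), (@lebesgue_measure R).-integrable `]0, 1[
   (EFin \o (fun x => w x * relu (x - b i) * relu (x - b j))).
  move=> i j; apply: (intW2 (Mf := 1 + `|b i|) (Mg := 1 + `|b j|)) => //;
    by [exact: mrelu01 | move=> x xD; exact: relu_bnd].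
have i2 : forall (i : 'I_n.+1) (j : 'I_n), (@lebesgue_measure R).-integrable `]0, 1[
   (EFin \o (fun x => w x * relu (x - b i) * heav (x - b j.+1))).
  move=> i j; apply: (intW2 (Mf := 1 + `|b i|) (Mg := 1)) => //;
    by [exact: mrelu01 | exact: mheav01 | move=> x xD; exact: relu_bnd |
        move=> x xD; exact: heav_bnd].
have i3 : forall (i : 'I_n) (j : 'I_n.+1), (@lebesgue_measure R).-integrable `]0, 1[
   (EFin \o (fun x => w x * relu (x - b j) * heav (x - b i.+1))).
  by move=> i j; exact: i2.
have i4 : forall (i : 'I_n) (j : 'I_n), (@lebesgue_measure R).-integrable `]0, 1[
   (EFin \o (fun x => w x * heav (x - b i.+1) * heav (x - b j.+1))).
  move=> i j; apply: (intW2 (Mf := 1) (Mg := 1)) => //;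
    by [exact: mheav01 | move=> x xD; exact: heav_bnd].
rewrite /HSigma qform_block.
under eq_bigr do under eq_bigr do rewrite mxE.
under [X in _ + X + _ + _]eq_bigr do under eq_bigr do rewrite mxE mulrN -mulNr.
under [X in _ + X + _]eq_bigr do under eq_bigr do rewrite mxE mulrN -mulNr.
under [X in _ + X]eq_bigr do under eq_bigr do rewrite mxE.
rewrite /I01 (dsum_int _ i1) (dsum_int _ i2) (dsum_int _ i3) (dsum_int _ i4).
rewrite -!RintegralD //; last first.
all: try (apply: integD').
all: try (exact: (dsum_integ (fun i j => be 0 i * be 0 j) i4)).
all: try (exact: (dsum_integ (fun i j => - (be 0 i * al 0 j)) i3)).
all: try (exact: (dsum_integ (fun i j => - (al 0 i * be 0 j)) i2)).
all: try (exact: (dsum_integ (fun i j => al 0 i * al 0 j) i1)).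
all: try (apply: integD').
all: try (exact: (dsum_integ (fun i j => be 0 i * be 0 j) i4)).
all: try (exact: (dsum_integ (fun i j => - (be 0 i * al 0 j)) i3)).
all: try (exact: (dsum_integ (fun i j => - (al 0 i * be 0 j)) i2)).
all: try (exact: (dsum_integ (fun i j => al 0 i * al 0 j) i1)).
apply: eq_Rintegral => x _.
rewrite (dprodE (W := w x) (F := fun i : 'I_n.+1 => al 0 i * relu (x - b i))
                           (G := fun i : 'I_n.+1 => al 0 i * relu (x - b i))); last first.
  by move=> i j /=; ring.
rewrite (dprodE (W := - w x) (F := fun i : 'I_n.+1 => al 0 i * relu (x - b i))
                           (G := fun j : 'I_n => be 0 j * heav (x - b j.+1))); last first.
  by move=> i j /=; ring.
rewrite (dprodE (W := - w x) (F := fun j : 'I_n => be 0 j * heav (x - b j.+1))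
                           (G := fun i : 'I_n.+1 => al 0 i * relu (x - b i))); last first.
  by move=> i j /=; ring.
rewrite (dprodE (W := w x) (F := fun j : 'I_n => be 0 j * heav (x - b j.+1))
                           (G := fun j : 'I_n => be 0 j * heav (x - b j.+1))); last first.
  by move=> i j /=; ring.
ring.
Qed.


Definition cS (R : realType) n (al : 'rV[R]_n.+1) (k : nat) : R :=
  \sum_(i < n.+1 | (i <= k)%N) al 0 i.

Definition US (R : realType) n (b : nat -> R) (al : 'rV[R]_n.+1) (be : 'rV[R]_n)
  (k : nat) (x : R) : R :=
  \sum_(i < n.+1 | (i <= k)%N) al 0 i * (x - b i) - \sum_(j < n | (j.+1 <= k)%N) be 0 j.

Lemma sum_if_eq (R : realType) m (F : 'I_m -> R) (j0 : 'I_m) :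
  \sum_(i < m) (if i == j0 then F i else 0) = F j0.
Proof. by rewrite -big_mkcond /= big_pred1_eq. Qed.

Lemma u_piece (R : realType) n (b : nat -> R) (al : 'rV[R]_n.+1) (be : 'rV[R]_n)
  (k : nat) (x : R) :
  (forall i : nat, (i <= n)%N -> b i < b i.+1) -> (k <= n)%N ->
  b k < x -> x < b k.+1 ->
  \sum_(i < n.+1) al 0 i * relu (x - b i) - \sum_(j < n) be 0 j * heav (x - b j.+1)
  = US b al be k x.
Proof.
move=> hb kn x1 x2; rewrite /US !(big_mkcond (fun i => (_ <= k)%N)) /=.
congr (_ - _); apply: eq_bigr => i _.
  case: ifPn => ik.
    have : b i <= b k by apply: (bmono hb) => //; apply: leq_trans kn _.
    by move=> h; rewrite /relu max_r //; lra.
  have : b k.+1 <= b i.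
    by apply: (bmono hb); [rewrite ltnNge | exact: ltnW (ltn_ord i)].
  by move=> h; rewrite /relu max_l ?mulr0 //; lra.
case: ifPn => ik.
  have : b i.+1 <= b k by apply: (bmono hb) => //; apply: leq_trans kn _.
  by move=> h; rewrite /heav ifT ?mulr1 //; lra.
have : b k.+1 <= b i.+1.
  by apply: (bmono hb); [rewrite ltnNge | exact: ltnW (ltn_ord i)].
move=> h; rewrite /heav ifF ?ifF ?mulr0 //.
  by apply/eqP; lra.
by apply/negbTE; rewrite -leNgt; lra.
Qed.

Lemma US_lin (R : realType) n (b : nat -> R) (al : 'rV[R]_n.+1) (be : 'rV[R]_n)
  (k : nat) (x : R) :
  US b al be k x = US b al be k (b k) + cS al k * (x - b k).
Proof.
rewrite /US /cS mulr_suml.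
have -> : \sum_(i < n.+1 | (i <= k)%N) al 0 i * (x - b i) =
  \sum_(i < n.+1 | (i <= k)%N) al 0 i * (b k - b i) +
  \sum_(i < n.+1 | (i <= k)%N) al 0 i * (x - b k).
  by rewrite -big_split /=; apply: eq_bigr => i _; ring.
ring.
Qed.

Lemma US_jump (R : realType) n (b : nat -> R) (al : 'rV[R]_n.+1) (be : 'rV[R]_n)
  (j : 'I_n) :
  US b al be j (b j.+1) - US b al be j.+1 (b j.+1) = be 0 j.
Proof.
rewrite /US !(big_mkcond (fun i => (_ <= _)%N)) /=.
have -> : \sum_(i < n.+1) (if (i <= j)%N then al 0 i * (b j.+1 - b i) else 0) =
          \sum_(i < n.+1) (if (i <= j.+1)%N then al 0 i * (b j.+1 - b i) else 0).
  apply: eq_bigr => i _; case: (ltngtP i j.+1) => h.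
  - by rewrite ifT ?ifT // ?(ltnW h) // -ltnS.
  - by rewrite ifF ?ifF //; apply/negbTE; rewrite -ltnNge // ltnW.
  - by rewrite h ltnn subrr mulr0.
rewrite -(sum_if_eq (fun jj : 'I_n => be 0 jj) j).
have -> : \sum_(i < n) (if (i.+1 <= j.+1)%N then be 0 i else 0) =
  \sum_(i < n) (if (i.+1 <= j)%N then be 0 i else 0) +
  \sum_(i < n) (if i == j then be 0 i else 0).
  rewrite -big_split /=; apply: eq_bigr => i _.
  case: (ltngtP i j) => h.
  - by rewrite -val_eqE /= (ltn_eqF h) ?h ltnS (ltnW h) /= ?addr0.
  - have f1 : (i < j)%N = false by rewrite ltnNge ltnW.
    have f2 : (i <= j)%N = false by rewrite leqNgt h.
    by rewrite -val_eqE /= (gtn_eqF h) ltnS f2 /= add0r.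
  - by rewrite -val_eqE /= h eqxx ltnS leqnn /= add0r.
ring.
Qed.


Lemma sum_drop_last (R : realType) n (F : nat -> R) :
  (forall k, 0 <= F k) -> \sum_(j < n) F j <= \sum_(k < n.+1) F k.
Proof.
move=> F0; rewrite big_ord_recr /=; rewrite lerDl; exact: F0.
Qed.

Lemma sum_drop_first (R : realType) n (F : nat -> R) :
  (forall k, 0 <= F k) -> \sum_(j < n) F j.+1 <= \sum_(k < n.+1) F k.
Proof.
move=> F0; rewrite big_ord_recl /=; rewrite lerDr; exact: F0.
Qed.

Lemma al_sq_bound (R : realType) n (c : nat -> R) (al : 'rV[R]_n.+1) :
  al 0 ord0 = c 0%N -> (forall j : 'I_n, al 0 (lift ord0 j) = c j.+1 - c j) ->
  \sum_(i < n.+1) al 0 i ^+ 2 <= 4 * \sum_(k < n.+1) c k ^+ 2.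
Proof.
move=> a0 aS.
have e1 : \sum_(i < n.+1) al 0 i ^+ 2 = c 0%N ^+ 2 + \sum_(j < n) (c j.+1 - c j) ^+ 2.
  by rewrite big_ord_recl a0; congr (_ + _); apply: eq_bigr => j _; rewrite aS.
have e2 : \sum_(k < n.+1) c k ^+ 2 = c 0%N ^+ 2 + \sum_(j < n) c j.+1 ^+ 2.
  by rewrite big_ord_recl.
have l1 : \sum_(j < n) (c j.+1 - c j) ^+ 2 <=
    \sum_(j < n) (2 * c j.+1 ^+ 2 + 2 * c j ^+ 2).
  by apply: ler_sum => j _; have := sqr_ge0 (c j.+1 + c j); lra.
have l2 : \sum_(j < n) c j ^+ 2 <= \sum_(k < n.+1) c k ^+ 2.
  by apply: (@sum_drop_last _ _ (fun k => c k ^+ 2)) => k; exact: sqr_ge0.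
rewrite big_split /= -!mulr_sumr in l1.
have := sqr_ge0 (c 0%N); lra.
Qed.

Lemma AMGM (R : realType) (e x y : R) : 0 < e -> x * y <= e / 2 * x ^+ 2 + y ^+ 2 / (2 * e).
Proof.
move=> e0.
have h : 0 <= (e * x - y) ^+ 2 / (2 * e) by apply: divr_ge0; [exact: sqr_ge0|lra].
have E : e / 2 * x ^+ 2 + y ^+ 2 / (2 * e) - x * y = (e * x - y) ^+ 2 / (2 * e).
  by field; lra.
lra.
Qed.

Lemma HS_alg (R : realType) n (h L c : nat -> R) (al : 'rV[R]_n.+1) (be : 'rV[R]_n)
  (hm : R) :
  (forall k, (k <= n)%N -> 0 < h k) -> 0 < hm ->
  (forall k, (k <= n)%N -> hm <= h k) ->
  (forall j : 'I_n, be 0 j = L j + c j * h j - L j.+1) ->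
  al 0 ord0 = c 0%N -> (forall j : 'I_n, al 0 (lift ord0 j) = c j.+1 - c j) ->
  hm ^+ 3 / 96 * (\sum_(i < n.+1) al 0 i ^+ 2)
  + 1 / 24 * (\sum_(j < n) Num.min (h j) (h j.+1) * be 0 j ^+ 2)
  <= \sum_(k < n.+1) (h k * L k ^+ 2 + L k * c k * h k ^+ 2 + c k ^+ 2 * h k ^+ 3 / 3).
Proof.
move=> hpos hm0 hmle hbe a0 aS.
pose Rr k := L k + c k * h k.
pose PL k := (if (k <= n)%N then h k * L k ^+ 2 else 0).
pose PR k := (if (k <= n)%N then h k * Rr k ^+ 2 else 0).
pose P k := PL k + PR k.
pose Q k := (if (k <= n)%N then h k ^+ 3 * c k ^+ 2 else 0).
have step1 : forall k : 'I_n.+1,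
    P k / 12 + Q k / 24 <= h k * L k ^+ 2 + L k * c k * h k ^+ 2 + c k ^+ 2 * h k ^+ 3 / 3.
  move=> k; have kn : (k <= n)%N by rewrite -ltnS.
  rewrite /P /PL /PR /Q /Rr kn; have hk := hpos _ kn.
  have : 0 <= h k * (L k + (L k + c k * h k)) ^+ 2 by apply: mulr_ge0; [lra|exact: sqr_ge0].
  move=> H; nra.
have PL0 : forall k, 0 <= PL k.
  move=> k; rewrite /PL; case: ifPn => // kn.
  by apply: mulr_ge0; [exact: ltW (hpos _ kn)| exact: sqr_ge0].
have PR0 : forall k, 0 <= PR k.
  move=> k; rewrite /PR; case: ifPn => // kn.
  by apply: mulr_ge0; [exact: ltW (hpos _ kn)| exact: sqr_ge0].
have P0 : forall k, 0 <= P k by move=> k; apply: addr_ge0.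
have Q0 : forall k, 0 <= Q k.
  move=> k; rewrite /Q; case: ifPn => // kn.
  by apply: mulr_ge0; [apply: exprn_ge0; exact: ltW (hpos _ kn)| exact: sqr_ge0].
have jb : \sum_(j < n) Num.min (h j) (h j.+1) * be 0 j ^+ 2 <=
   2 * \sum_(k < n.+1) P k.
  have l1 : \sum_(j < n) Num.min (h j) (h j.+1) * be 0 j ^+ 2 <=
     \sum_(j < n) (2 * PR j + 2 * PL j.+1).
    apply: ler_sum => j _.
    have jn : (j <= n)%N by apply: ltnW.
    have jn' : (j.+1 <= n)%N by [].
    rewrite /PR /PL jn jn' hbe.
    have hj := hpos _ jn; have hj' := hpos _ jn'.
    have m1 : Num.min (h j) (h j.+1) <= h j by rewrite ge_min lexx.
    have m2 : Num.min (h j) (h j.+1) <= h j.+1 by rewrite ge_min lexx orbT.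
    have m0 : 0 < Num.min (h j) (h j.+1) by rewrite lt_min hj hj'.
    rewrite /Rr.
    set m := Num.min _ _ in m1 m2 m0 *.
    set A := L j + c j * h j. set B := L j.+1.
    have : (A - B) ^+ 2 <= 2 * A ^+ 2 + 2 * B ^+ 2 by have := sqr_ge0 (A + B); lra.
    move=> hAB.
    have sA := sqr_ge0 A; have sB := sqr_ge0 B.
    have t1 : m * (A - B) ^+ 2 <= m * (2 * A ^+ 2 + 2 * B ^+ 2).
      by apply: ler_wpM2l => //; exact: ltW.
    have t2 : m * A ^+ 2 <= h j * A ^+ 2 by exact: ler_wpM2r.
    have t3 : m * B ^+ 2 <= h j.+1 * B ^+ 2 by exact: ler_wpM2r.
    lra.
  apply: le_trans l1 _.
  rewrite big_split /= -!mulr_sumr.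
  have := sum_drop_last n PR0; have := sum_drop_first n PL0.
  rewrite /P big_split /=; lra.
have sb : hm ^+ 3 * \sum_(k < n.+1) c k ^+ 2 <= \sum_(k < n.+1) Q k.
  rewrite mulr_sumr; apply: ler_sum => k _.
  have kn : (k <= n)%N by rewrite -ltnS.
  rewrite /Q kn; apply: ler_wpM2r; first exact: sqr_ge0.
  apply: lerXn2r; rewrite ?nnegrE; [exact: ltW| |exact: hmle].
  exact: ltW (lt_le_trans hm0 (hmle _ kn)).
have ab := al_sq_bound a0 aS.
have sum1 : (\sum_(k < n.+1) P k) / 12 + (\sum_(k < n.+1) Q k) / 24 <=
   \sum_(k < n.+1) (h k * L k ^+ 2 + L k * c k * h k ^+ 2 + c k ^+ 2 * h k ^+ 3 / 3).
  rewrite !mulr_suml -big_split /=; apply: ler_sum => k _; exact: step1.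
have hm3 : 0 <= hm ^+ 3 by apply: exprn_ge0; exact: ltW.
have : hm ^+ 3 * (\sum_(i < n.+1) al 0 i ^+ 2) <= hm ^+ 3 * (4 * \sum_(k < n.+1) c k ^+ 2).
  exact: ler_wpM2l.
lra.
Qed.


Lemma HS_integ (R : realType) n (b : nat -> R) (w : R -> R)
  (al : 'rV[R]_n.+1) (be : 'rV[R]_n) :
  (@lebesgue_measure R).-integrable `]0, 1[ (EFin \o w) ->
  (@lebesgue_measure R).-integrable `]0, 1[ (EFin \o (fun x =>
     (w x * (\sum_(i < n.+1) al 0 i * relu (x - b i)
             - \sum_(j < n) be 0 j * heav (x - b j.+1)) ^+ 2))).
Proof.
move=> wi.
have i1 : forall (i : 'I_n.+1) (j : 'I_n.+1), (@lebesgue_measure R).-integrable `]0, 1[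
   (EFin \o (fun x => w x * relu (x - b i) * relu (x - b j))).
  move=> i j; apply: (intW2 (Mf := 1 + `|b i|) (Mg := 1 + `|b j|)) => //;
    by [exact: mrelu01 | move=> x xD; exact: relu_bnd].
have i2 : forall (i : 'I_n.+1) (j : 'I_n), (@lebesgue_measure R).-integrable `]0, 1[
   (EFin \o (fun x => w x * relu (x - b i) * heav (x - b j.+1))).
  move=> i j; apply: (intW2 (Mf := 1 + `|b i|) (Mg := 1)) => //;
    by [exact: mrelu01 | exact: mheav01 | move=> x xD; exact: relu_bnd |
        move=> x xD; exact: heav_bnd].
have i3 : forall (i : 'I_n) (j : 'I_n.+1), (@lebesgue_measure R).-integrable `]0, 1[
   (EFin \o (fun x => w x * relu (x - b j) * heav (x - b i.+1))).
  by move=> i j; exact: i2.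
have i4 : forall (i : 'I_n) (j : 'I_n), (@lebesgue_measure R).-integrable `]0, 1[
   (EFin \o (fun x => w x * heav (x - b i.+1) * heav (x - b j.+1))).
  move=> i j; apply: (intW2 (Mf := 1) (Mg := 1)) => //;
    by [exact: mheav01 | move=> x xD; exact: heav_bnd].
pose g := fun x =>
  \sum_(i < n.+1) \sum_(j < n.+1) al 0 i * al 0 j * (w x * relu (x - b i) * relu (x - b j))
  + \sum_(i < n.+1) \sum_(j < n) - (al 0 i * be 0 j) * (w x * relu (x - b i) * heav (x - b j.+1))
  + \sum_(i < n) \sum_(j < n.+1) - (be 0 i * al 0 j) * (w x * relu (x - b j) * heav (x - b i.+1))
  + \sum_(i < n) \sum_(j < n) be 0 i * be 0 j * (w x * heav (x - b i.+1) * heav (x - b j.+1)).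
have gi : (@lebesgue_measure R).-integrable `]0, 1[ (EFin \o g).
  apply: integD'; last exact: (dsum_integ (fun i j => be 0 i * be 0 j) i4).
  apply: integD'; last exact: (dsum_integ (fun i j => - (be 0 i * al 0 j)) i3).
  apply: integD'; last exact: (dsum_integ (fun i j => - (al 0 i * be 0 j)) i2).
  exact: (dsum_integ (fun i j => al 0 i * al 0 j) i1).
apply: (eq_integrable _ _ _ _ gi) => //= x _; congr EFin; rewrite /g.
rewrite (dprodE (W := w x) (F := fun i : 'I_n.+1 => al 0 i * relu (x - b i))
                           (G := fun i : 'I_n.+1 => al 0 i * relu (x - b i))); last first.
  by move=> i j /=; ring.
rewrite (dprodE (W := - w x) (F := fun i : 'I_n.+1 => al 0 i * relu (x - b i))
                           (G := fun j : 'I_n => be 0 j * heav (x - b j.+1))); last first.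
  by move=> i j /=; ring.
rewrite (dprodE (W := - w x) (F := fun j : 'I_n => be 0 j * heav (x - b j.+1))
                           (G := fun i : 'I_n.+1 => al 0 i * relu (x - b i))); last first.
  by move=> i j /=; ring.
rewrite (dprodE (W := w x) (F := fun j : 'I_n => be 0 j * heav (x - b j.+1))
                           (G := fun j : 'I_n => be 0 j * heav (x - b j.+1))); last first.
  by move=> i j /=; ring.
ring.
Qed.

Lemma quad_integ (R : realType) (a c L s k : R) : a < c ->
  (@lebesgue_measure R).-integrable `]a, c[
     (EFin \o (fun x => k * (L + s * (x - a)) ^+ 2)).
Proof.
move=> ac; apply: integZ.
pose P : {poly R} := (L%:P + s *: ('X - a%:P)) ^+ 2.
have -> : (fun x => (L + s * (x - a)) ^+ 2) = horner P.
  by apply/funext => x; rewrite /P !(hornerE, hornerXn) /=.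
have iac : (@lebesgue_measure R).-integrable `[a, c] (EFin \o horner P).
  apply: continuous_compact_integrable; first exact: segment_compact.
  by apply: continuous_subspaceT => x; exact: continuous_horner.
by apply: integrableS iac => //; apply: subset_itv; rewrite bnd_simp.
Qed.

Lemma cS0 (R : realType) n (al : 'rV[R]_n.+1) : cS al 0 = al 0 ord0.
Proof.
rewrite /cS (eq_bigl (fun i => i == ord0)) ?big_pred1_eq // => i.
by rewrite leqn0 -val_eqE.
Qed.

Lemma cSS (R : realType) n (al : 'rV[R]_n.+1) (j : 'I_n) :
  cS al j.+1 - cS al j = al 0 (lift ord0 j).
Proof.
rewrite /cS !(big_mkcond (fun i => (_ <= _)%N)) /= -sumrB.
rewrite -(sum_if_eq (fun i => al 0 i) (lift ord0 j)); apply: eq_bigr => i _.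
rewrite -val_eqE /= /bump /=.
case: (ltngtP i j.+1) => h.
- by rewrite ifT ?ifT ?subrr // -ltnS.
- by rewrite ifF ?ifF ?subrr //; apply/negbTE; rewrite -ltnNge // ltnW.
- by rewrite ?h ?leqnn ?ltnn ?eqxx /= ?subr0.
Qed.


Lemma hmin_le (R : realType) n (b : nat -> R) (k : 'I_n.+1) : hmin n b <= hh b k.
Proof. exact: bigmin_le. Qed.

Lemma hmin_gt0 (R : realType) n (b : nat -> R) :
  (forall i : nat, (i <= n)%N -> b i < b i.+1) -> 0 < hmin n b.
Proof.
move=> hb; apply/bigmin_gtP; split; first by rewrite /hh subr_gt0; apply: hb.
by move=> i _; rewrite /hh subr_gt0; apply: hb; rewrite -ltnS.
Qed.

Lemma sub01 (R : realType) n (b : nat -> R) (k : 'I_n.+1) :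
  b 0%N = 0 -> b n.+1 = 1 -> (forall i : nat, (i <= n)%N -> b i < b i.+1) ->
  `]b k, b k.+1[ `<=` `](0 : R), 1[.
Proof.
move=> b0 b1 hb; apply: subset_itv; rewrite bnd_simp.
  by rewrite -b0; exact: (bmono hb (leq0n k) (ltnW (ltn_ord k))).
by rewrite -b1; exact: (bmono hb (ltn_ord k) (leqnn _)).
Qed.

Lemma HS_piece (R : realType) n (b : nat -> R) (w : R -> R) (w0 : R)
  (al : 'rV[R]_n.+1) (be : 'rV[R]_n) (k : 'I_n.+1) :
  b 0%N = 0 -> b n.+1 = 1 -> (forall i : nat, (i <= n)%N -> b i < b i.+1) ->
  (@lebesgue_measure R).-integrable `]0, 1[ (EFin \o w) ->
  (forall x : R, 0 < x < 1 -> w0 <= w x) ->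
  w0 * (hh b k * US b al be k (b k) ^+ 2
        + US b al be k (b k) * cS al k * hh b k ^+ 2
        + cS al k ^+ 2 * hh b k ^+ 3 / 3)
  <= \int[@lebesgue_measure R]_(x in `]b k, b k.+1[)
     (w x * (\sum_(i < n.+1) al 0 i * relu (x - b i)
             - \sum_(j < n) be 0 j * heav (x - b j.+1)) ^+ 2).
Proof.
move=> b0 b1 hb wi ww0.
have kn : (k <= n)%N by rewrite -ltnS.
have bk := hb _ kn.
have sub := sub01 (k := k) b0 b1 hb.
set L := US b al be k (b k); set c := cS al k.
have -> : w0 * (hh b k * L ^+ 2 + L * c * hh b k ^+ 2 + c ^+ 2 * hh b k ^+ 3 / 3) =
   w0 * \int[@lebesgue_measure R]_(x in `]b k, b k.+1[) ((L + c * (x - b k)) ^+ 2).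
  by rewrite int_quad // /hh; ring.
rewrite -RintegralZl //; last first.
  by have := quad_integ L c 1 bk; apply: eq_integrable => // x _ /=; rewrite mul1r.
apply: le_Rintegral => //.
- exact: quad_integ.
- apply: integrableS (HS_integ b al be wi) => //.
move=> x /= xJ.
have xD : 0 < x < 1 by have := sub x xJ; rewrite /= in_itv.
move: xJ; rewrite /= in_itv /= => /andP[x1 x2].
rewrite (u_piece al be hb kn x1 x2) (US_lin b al be k x) -/L -/c.
apply: ler_wpM2r; first exact: sqr_ge0.
exact: ww0.
Qed.


Lemma HS_main (R : realType) n (b : nat -> R) (w : R -> R) (w0 : R)
  (al : 'rV[R]_n.+1) (be : 'rV[R]_n) :
  b 0%N = 0 -> b n.+1 = 1 -> (forall i : nat, (i <= n)%N -> b i < b i.+1) ->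
  (@lebesgue_measure R).-integrable `]0, 1[ (EFin \o w) ->
  0 <= w0 -> (forall x : R, 0 < x < 1 -> w0 <= w x) ->
  w0 * hmin n b ^+ 3 / 96 * (\sum_(i < n.+1) al 0 i ^+ 2)
      + w0 / 24 * (\sum_(i < n) htil b i.+1 * be 0 i ^+ 2)
  <= qform (HSigma n b w) al be.
Proof.
move=> b0 b1 hb wi w00 ww0.
rewrite HS_int //.
apply: le_trans (pieces b0 b1 hb (HS_integ b al be wi) _); last first.
  move=> x; rewrite in_itv /= => /andP[x0 x1].
  apply: mulr_ge0; last exact: sqr_ge0.
  by apply: le_trans w00 (ww0 x _); rewrite x0 x1.
apply: le_trans (ler_sum _ (fun k _ => HS_piece al be k b0 b1 hb wi ww0)).
rewrite -mulr_sumr.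
have -> : w0 * hmin n b ^+ 3 / 96 * (\sum_(i < n.+1) al 0 i ^+ 2)
      + w0 / 24 * (\sum_(i < n) htil b i.+1 * be 0 i ^+ 2) =
   w0 * (hmin n b ^+ 3 / 96 * (\sum_(i < n.+1) al 0 i ^+ 2)
      + 1 / 24 * (\sum_(i < n) Num.min (hh b i) (hh b i.+1) * be 0 i ^+ 2)).
  by rewrite /htil /=; ring.
apply: ler_wpM2l => //.
apply: (HS_alg (h := hh b) (L := fun k => US b al be k (b k)) (c := cS al)).
- by move=> k kn; rewrite /hh subr_gt0; apply: hb.
- exact: hmin_gt0.
- by move=> k kn; exact: (hmin_le b (Ordinal (kn : (k < n.+1)%N))).
- move=> j; have := US_jump b al be j; rewrite (US_lin b al be j (b j.+1)) /hh.
  lra.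
- by rewrite cS0.
- by move=> j; rewrite cSS.
Qed.


Lemma HL_alg (R : realType) n (h c : nat -> R) (W : 'I_n -> R)
  (al : 'rV[R]_n.+1) (be : 'rV[R]_n) (hm w0 tau : R) :
  (forall k, (k <= n)%N -> 0 < h k) -> 0 < hm ->
  (forall k, (k <= n)%N -> hm <= h k) -> 0 < w0 -> 0 < tau -> tau <= 1 ->
  al 0 ord0 = c 0%N -> (forall j : 'I_n, al 0 (lift ord0 j) = c j.+1 - c j) ->
  w0 * (1 - tau) * hm / 4 * (\sum_(i < n.+1) al 0 i ^+ 2)
  - 1 / (2 * tau * w0) *
     (\sum_(j < n) W j ^+ 2 * ((h j)^-1 + (h j.+1)^-1) * be 0 j ^+ 2)
  <= w0 * (\sum_(k < n.+1) h k * c k ^+ 2)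
     - \sum_(j < n) be 0 j * W j * (c j + c j.+1).
Proof.
move=> hpos hm0 hmle w00 t0 t1 a0 aS.
pose G k := (if (k <= n)%N then h k * c k ^+ 2 else 0).
have G0 : forall k, 0 <= G k.
  move=> k; rewrite /G; case: ifPn => // kn.
  by apply: mulr_ge0; [exact: ltW (hpos _ kn)|exact: sqr_ge0].
have GE : \sum_(k < n.+1) h k * c k ^+ 2 = \sum_(k < n.+1) G k.
  by apply: eq_bigr => k _; rewrite /G -ltnS ltn_ord.
have per : forall j : 'I_n,
  be 0 j * W j * (c j + c j.+1) <=
    tau * w0 / 2 * (G j + G j.+1)
    + 1 / (2 * tau * w0) * (W j ^+ 2 * ((h j)^-1 + (h j.+1)^-1) * be 0 j ^+ 2).
  move=> j.
  have jn : (j <= n)%N by apply: ltnW.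
  have jn' : (j.+1 <= n)%N by [].
  have hj := hpos _ jn; have hj' := hpos _ jn'.
  rewrite /G jn jn'.
  have e1 : 0 < tau * w0 * h j by rewrite !mulr_gt0.
  have e2 : 0 < tau * w0 * h j.+1 by rewrite !mulr_gt0.
  have A1 := AMGM (c j) (be 0 j * W j) e1.
  have A2 := AMGM (c j.+1) (be 0 j * W j) e2.
  have E1 : (be 0 j * W j) ^+ 2 / (2 * (tau * w0 * h j)) =
      1 / (2 * tau * w0) * (W j ^+ 2 * (h j)^-1 * be 0 j ^+ 2).
    by field; repeat split; lra.
  have E2 : (be 0 j * W j) ^+ 2 / (2 * (tau * w0 * h j.+1)) =
      1 / (2 * tau * w0) * (W j ^+ 2 * (h j.+1)^-1 * be 0 j ^+ 2).
    by field; repeat split; lra.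
  rewrite E1 in A1; rewrite E2 in A2.
  have E3 : tau * w0 / 2 * (h j * c j ^+ 2 + h j.+1 * c j.+1 ^+ 2) =
     tau * w0 * h j / 2 * c j ^+ 2 + tau * w0 * h j.+1 / 2 * c j.+1 ^+ 2 by ring.
  have E4 : 1 / (2 * tau * w0) * (W j ^+ 2 * ((h j)^-1 + (h j.+1)^-1) * be 0 j ^+ 2) =
     1 / (2 * tau * w0) * (W j ^+ 2 * (h j)^-1 * be 0 j ^+ 2) +
     1 / (2 * tau * w0) * (W j ^+ 2 * (h j.+1)^-1 * be 0 j ^+ 2) by ring.
  rewrite E3 E4.
  have E5 : be 0 j * W j * (c j + c j.+1) = c j * (be 0 j * W j) + c j.+1 * (be 0 j * W j)
    by ring.
  rewrite E5; lra.
have S1 : \sum_(j < n) be 0 j * W j * (c j + c j.+1) <=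
    \sum_(j < n) (tau * w0 / 2 * (G j + G j.+1)
    + 1 / (2 * tau * w0) * (W j ^+ 2 * ((h j)^-1 + (h j.+1)^-1) * be 0 j ^+ 2)).
  by apply: ler_sum => j _; exact: per.
rewrite big_split /= -!mulr_sumr big_split /= in S1.
have d1 := sum_drop_last n G0.
have d2 := sum_drop_first n G0.
have ab := al_sq_bound a0 aS.
have hmS : hm * \sum_(k < n.+1) c k ^+ 2 <= \sum_(k < n.+1) G k.
  rewrite -GE mulr_sumr; apply: ler_sum => k _; apply: ler_wpM2r; first exact: sqr_ge0.
  by apply: hmle; rewrite -ltnS.
rewrite GE.
set SG := \sum_(k < n.+1) G k in d1 d2 hmS *.
set SC := \sum_(k < n.+1) c k ^+ 2 in ab hmS.
set SA := \sum_(i < n.+1) al 0 i ^+ 2 in ab *.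
set SX := \sum_(j < n) W j ^+ 2 * _ * _ in S1 *.
set SB := \sum_(j < n) be 0 j * W j * (c j + c j.+1) in S1 *.
have k1 : 0 <= w0 * (1 - tau) by apply: mulr_ge0; lra.
have k2 : w0 * (1 - tau) * (hm * SC) <= w0 * (1 - tau) * SG by exact: ler_wpM2l.
have k3 : w0 * (1 - tau) * hm / 4 * SA <= w0 * (1 - tau) * hm / 4 * (4 * SC).
  apply: ler_wpM2l => //; apply: divr_ge0; last lra.
  by apply: mulr_ge0 => //; exact: ltW.
have k4 : tau * w0 / 2 * (\sum_(i < n) G i) + tau * w0 / 2 * (\sum_(i < n) G i.+1)
   <= tau * w0 * SG.
  have : 0 <= tau * w0 / 2 by apply: divr_ge0; [apply: mulr_ge0; lra|lra].
  move=> p; have := ler_wpM2l p d1; have := ler_wpM2l p d2; lra.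
have E : w0 * (1 - tau) * hm / 4 * (4 * SC) = w0 * (1 - tau) * (hm * SC) by field.
rewrite E in k3.
lra.
Qed.


Lemma heav_sum (R : realType) n (b : nat -> R) (al : 'rV[R]_n.+1) (j : 'I_n) :
  (forall i : nat, (i <= n)%N -> b i < b i.+1) ->
  \sum_(i < n.+1) al 0 i * heav (b j.+1 - b i) = (cS al j + cS al j.+1) / 2.
Proof.
move=> hb.
have -> : cS al j.+1 = cS al j + al 0 (lift ord0 j) by rewrite -cSS; ring.
have -> : \sum_(i < n.+1) al 0 i * heav (b j.+1 - b i) =
   \sum_(i < n.+1) (if (i <= j)%N then al 0 i else 0) +
   \sum_(i < n.+1) (if i == lift ord0 j then al 0 i / 2 else 0).
  rewrite -big_split /=; apply: eq_bigr => i _.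
  rewrite -val_eqE /= /bump /=.
  case: (ltngtP i j.+1) => h.
  - have bl := bmono_lt hb h (leqW (ltn_ord j)).
    have e1 : (0 < b j.+1 - b i) = true by rewrite subr_gt0.
    by rewrite -ltnS h /heav e1 mulr1 addr0.
  - have bl := bmono_lt hb h (ltnW (ltn_ord i)).
    have e1 : (0 < b j.+1 - b i) = false by apply/negbTE; rewrite -leNgt; lra.
    have e2 : (b j.+1 - b i == 0) = false by apply/negbTE; apply/eqP; lra.
    have e3 : (i <= j)%N = false by apply/negbTE; rewrite -ltnNge ltnW.
    by rewrite e3 /heav e1 e2 mulr0 addr0.
  - have e3 : (i <= j)%N = false by rewrite h ltnn.
    by rewrite e3 /heav h subrr ltxx eqxx add0r mul1r.
rewrite sum_if_eq /cS (big_mkcond (fun i => (_ <= _)%N)) /=.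
set S := \sum_(i < n.+1) _.
by field.
Qed.


Lemma v_piece (R : realType) n (b : nat -> R) (al : 'rV[R]_n.+1) (k : nat) (x : R) :
  (forall i : nat, (i <= n)%N -> b i < b i.+1) -> (k <= n)%N ->
  b k < x -> x < b k.+1 ->
  \sum_(i < n.+1) al 0 i * heav (x - b i) = cS al k.
Proof.
move=> hb kn x1 x2; rewrite /cS (big_mkcond (fun i => (_ <= k)%N)) /=.
apply: eq_bigr => i _; case: ifPn => ik.
  have : b i <= b k by apply: (bmono hb) => //; apply: leq_trans kn _.
  by move=> h; rewrite /heav ifT ?mulr1 //; lra.
have : b k.+1 <= b i.
  by apply: (bmono hb); [rewrite ltnNge | exact: ltnW (ltn_ord i)].
move=> h; rewrite /heav ifF ?ifF ?mulr0 //.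
  by apply/eqP; lra.
by apply/negbTE; rewrite -leNgt; lra.
Qed.


Lemma HL_integ (R : realType) n (b : nat -> R) (w : R -> R) (al : 'rV[R]_n.+1) :
  (@lebesgue_measure R).-integrable `]0, 1[ (EFin \o w) ->
  (@lebesgue_measure R).-integrable `]0, 1[ (EFin \o (fun x =>
     (w x * (\sum_(i < n.+1) al 0 i * heav (x - b i)) ^+ 2))).
Proof.
move=> wi.
have i1 : forall (i : 'I_n.+1) (j : 'I_n.+1), (@lebesgue_measure R).-integrable `]0, 1[
   (EFin \o (fun x => w x * heav (x - b i) * heav (x - b j))).
  move=> i j; apply: (intW2 (Mf := 1) (Mg := 1)) => //;
    by [exact: mheav01 | move=> x xD; exact: heav_bnd].
have gi := dsum_integ (fun i j => al 0 i * al 0 j) i1.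
apply: (eq_integrable _ _ _ _ gi) => //= x _; congr EFin.
rewrite (dprodE (W := w x) (F := fun i : 'I_n.+1 => al 0 i * heav (x - b i))
                           (G := fun i : 'I_n.+1 => al 0 i * heav (x - b i))); last first.
  by move=> i j /=; ring.
ring.
Qed.

Lemma HL_int (R : realType) n (b : nat -> R) (w : R -> R)
  (al : 'rV[R]_n.+1) (be : 'rV[R]_n) :
  (forall i : nat, (i <= n)%N -> b i < b i.+1) ->
  (@lebesgue_measure R).-integrable `]0, 1[ (EFin \o w) ->
  qform (HLambda n b w) al be =
  \int[@lebesgue_measure R]_(x in `]0, 1[)
     (w x * (\sum_(i < n.+1) al 0 i * heav (x - b i)) ^+ 2)
  - \sum_(j < n) be 0 j * w (b j.+1) * (cS al j + cS al j.+1).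
Proof.
move=> hb wi.
have i1 : forall (i : 'I_n.+1) (j : 'I_n.+1), (@lebesgue_measure R).-integrable `]0, 1[
   (EFin \o (fun x => w x * heav (x - b i) * heav (x - b j))).
  move=> i j; apply: (intW2 (Mf := 1) (Mg := 1)) => //;
    by [exact: mheav01 | move=> x xD; exact: heav_bnd].
set S := \sum_(j < n) _.
rewrite /HLambda qform_block.
under eq_bigr do under eq_bigr do rewrite mxE.
under [X in _ + X + _ + _]eq_bigr do under eq_bigr do rewrite mxE.
under [X in _ + X + _]eq_bigr do under eq_bigr do rewrite mxE.
under [X in _ + X]eq_bigr do under eq_bigr do rewrite mxE.
have h4 : \sum_(i < n) \sum_(j < n) be 0 i * be 0 j * (0 : R) = 0.
  by rewrite big1 // => i _; rewrite big1 // => j _; rewrite mulr0.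
have h3 : \sum_(i < n) \sum_(j < n.+1) be 0 i * al 0 j * - (w (b i.+1) * heav (b i.+1 - b j))
   = - (S / 2).
  rewrite /S mulr_suml -sumrN; apply: eq_bigr => i _.
  transitivity (- (be 0 i * w (b i.+1)) * \sum_(j < n.+1) al 0 j * heav (b i.+1 - b j)).
    by rewrite mulr_sumr; apply: eq_bigr => j _; ring.
  by rewrite heav_sum //; field.
have h2 : \sum_(i < n.+1) \sum_(j < n) al 0 i * be 0 j * - (w (b j.+1) * heav (b j.+1 - b i))
   = - (S / 2).
  rewrite exchange_big /=; rewrite -h3; apply: eq_bigr => i _; apply: eq_bigr => j _; ring.
rewrite h2 h3 h4 /I01 (dsum_int _ i1).
have -> : \int[@lebesgue_measure R]_(x in `]0, 1[)
   (\sum_i \sum_j al 0 i * al 0 j * (w x * heav (x - b i) * heav (x - b j))) =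
   \int[@lebesgue_measure R]_(x in `]0, 1[)
     (w x * (\sum_(i < n.+1) al 0 i * heav (x - b i)) ^+ 2).
  apply: eq_Rintegral => x _.
  rewrite (dprodE (W := w x) (F := fun i : 'I_n.+1 => al 0 i * heav (x - b i))
                           (G := fun i : 'I_n.+1 => al 0 i * heav (x - b i))); last first.
    by move=> i j /=; ring.
  ring.
set I := \int[_]_(x in _) _.
by field.
Qed.


Lemma HL_piece (R : realType) n (b : nat -> R) (w : R -> R) (w0 : R)
  (al : 'rV[R]_n.+1) (k : 'I_n.+1) :
  b 0%N = 0 -> b n.+1 = 1 -> (forall i : nat, (i <= n)%N -> b i < b i.+1) ->
  (@lebesgue_measure R).-integrable `]0, 1[ (EFin \o w) ->
  (forall x : R, 0 < x < 1 -> w0 <= w x) ->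
  w0 * (hh b k * cS al k ^+ 2)
  <= \int[@lebesgue_measure R]_(x in `]b k, b k.+1[)
     (w x * (\sum_(i < n.+1) al 0 i * heav (x - b i)) ^+ 2).
Proof.
move=> b0 b1 hb wi ww0.
have kn : (k <= n)%N by rewrite -ltnS.
have bk := hb _ kn.
have sub := sub01 (k := k) b0 b1 hb.
set c := cS al k.
have -> : w0 * (hh b k * c ^+ 2) =
   w0 * \int[@lebesgue_measure R]_(x in `]b k, b k.+1[) ((c + 0 * (x - b k)) ^+ 2).
  by rewrite int_quad // /hh; ring.
rewrite -RintegralZl //; last first.
  by have := quad_integ c 0 1 bk; apply: eq_integrable => // x _ /=; rewrite mul1r.
apply: le_Rintegral => //.
- exact: quad_integ.
- apply: integrableS (HL_integ b al wi) => //.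
move=> x /= xJ.
have xD : 0 < x < 1 by have := sub x xJ; rewrite /= in_itv.
move: xJ; rewrite /= in_itv /= => /andP[x1 x2].
rewrite (v_piece al hb kn x1 x2) -/c mul0r addr0.
apply: ler_wpM2r; first exact: sqr_ge0.
exact: ww0.
Qed.

Lemma HL_main (R : realType) n (b : nat -> R) (w : R -> R) (w0 : R)
  (al : 'rV[R]_n.+1) (be : 'rV[R]_n) (tau : R) :
  b 0%N = 0 -> b n.+1 = 1 -> (forall i : nat, (i <= n)%N -> b i < b i.+1) ->
  (@lebesgue_measure R).-integrable `]0, 1[ (EFin \o w) ->
  (forall x : R, 0 < x < 1 -> w0 <= w x) ->
  0 < w0 -> 0 < tau <= 1 ->
  w0 * (1 - tau) * hmin n b / 4 * (\sum_(i < n.+1) al 0 i ^+ 2)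
  - 1 / (2 * tau * w0) *
    (\sum_(i < n) w (b i.+1) ^+ 2 * ((hh b i)^-1 + (hh b i.+1)^-1) * be 0 i ^+ 2)
  <= qform (HLambda n b w) al be.
Proof.
move=> b0 b1 hb wi ww0 w00 /andP[t0 t1].
rewrite HL_int //.
apply: le_trans (@HL_alg R n (hh b) (cS al) (fun j : 'I_n => w (b j.+1)) al be
                 (hmin n b) w0 tau _ _ _ w00 t0 t1 _ _) _.
- by move=> k kn; rewrite /hh subr_gt0; apply: hb.
- exact: hmin_gt0.
- by move=> k kn; exact: (hmin_le b (Ordinal (kn : (k < n.+1)%N))).
- by rewrite cS0.
- by move=> j; rewrite cSS.
apply: lerB => //.
rewrite mulr_sumr.
apply: le_trans (pieces b0 b1 hb (HL_integ b al wi) _); last first.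
  move=> x; rewrite in_itv /= => /andP[x0 x1].
  apply: mulr_ge0; last exact: sqr_ge0.
  by apply: le_trans (ltW w00) (ww0 x _); rewrite x0 x1.
apply: ler_sum => k _.
exact: (HL_piece al k b0 b1 hb wi ww0).
Qed.

Unset Implicit Arguments. Set Strict Implicit. Set Printing Implicit Defensive.

Theorem lemma4p2 (R : realType) (n : nat) (b : nat -> R) (w : R -> R) (w0 : R) :
  (0 < n)%N ->
  b 0%N = 0 -> b n.+1 = 1 ->
  (forall i : nat, (i <= n)%N -> b i < b i.+1) ->
  {within `]0%R, 1%R[, continuous w} ->
  (@lebesgue_measure R).-integrable `]0%R, 1%R[ (fun x => (w x)%:E) ->
  0 <= w0 ->
  (forall x : R, 0 < x < 1 -> w0 <= w x) ->
  forall (alpha : 'rV[R]_n.+1) (beta : 'rV[R]_n),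
    qform (HSigma n b w) alpha beta >=
      w0 * hmin n b ^+ 3 / 96 * (\sum_(i < n.+1) alpha 0 i ^+ 2)
      + w0 / 24 * (\sum_(i < n) htil b i.+1 * beta 0 i ^+ 2)
  /\
    (0 < w0 -> forall tau : R, 0 < tau <= 1 ->
      qform (HLambda n b w) alpha beta >=
        w0 * (1 - tau) * hmin n b / 4 * (\sum_(i < n.+1) alpha 0 i ^+ 2)
        - 1 / (2 * tau * w0) *
          (\sum_(i < n) w (b i.+1) ^+ 2 * ((hh b i)^-1 + (hh b i.+1)^-1)
                         * beta 0 i ^+ 2)).
Proof.
move=> n0 b0 b1 hb _ wi w00 ww0 alpha beta; split.
- exact: (@HS_main R n b w w0 alpha beta b0 b1 hb wi w00 ww0).
- move=> w0p tau ht.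
  exact: (@HL_main R n b w w0 alpha beta tau b0 b1 hb wi ww0 w0p ht).
Qed.
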